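(* Let $n\ge 5$ and $k\ge 1$, and let $\mathcal{G}^4_n$ be the graph on $\{1,\dots,n\}$ in which each node $i$ is adjacent to $i\pm1$ and $i\pm 2 \pmod n$. Then $$M^{\mathcal{G}^4_n}_{k,n}\le M^C_{k,\lfloor n/2\rfloor}+M^C_{k,\lceil n/2\rceil}+2 .$$ In particular, $M^{\mathcal{G}^4_n}_{k,n}=O(2k\log(n/(2k)))+2$.
   Context: Let $G=(V,E)$ be a simple undirected graph with $V=\{1,\dots,n\}$. A measurement matrix for $G$ is a matrix $A\in\{0,1\}^{m\times n}$ in which every nonzero row has a support that induces a connected subgraph of $G$. A vector $x\in\mathbb{R}^n$ is $k$-sparse if it has at most $k$ nonzero entries. $A$ identifies all $k$-sparse vectors if $Ax_1\ne Ax_2$ for every two distinct $k$-sparse vectors $x_1,x_2$. $M^G_{k,n}$ is the minimum number of rows of a measurement matrix for $G$ that identifies all $k$-sparse vectors. $M^C_{k,N}$ is the minimum number of rows of an arbitrary matrix in $\{0,1\}^{m\times N}$ that identifies all $k$-sparse vectors in $\mathbb{R}^N$; equivalently, it is $M^{K_N}_{k,N}$ for the complete graph $K_N$. It is known that $M^C_{k,N}=O(k\log(N/k))$. *)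

(* Defs.v *)
From Stdlib Require Import Reals ClassicalEpsilon.
From mathcomp Require Import all_boot all_algebra.
Set Implicit Arguments. Unset Strict Implicit. Unset Printing Implicit Defensive.

(* The subgraph induced by S is connected (empty / singleton sets count as connected). *)
Definition induced_connected (n : nat) (adj : rel 'I_n) (S : {set 'I_n}) : bool :=
  [forall u in S, forall v in S,
     connect [rel a b | [&& a \in S, b \in S & adj a b]] u v].

Definition row_support (m n : nat) (A : 'M[bool]_(m, n)) (i : 'I_m) : {set 'I_n} :=
  [set j | A i j].

Definition measurement_matrix (m n : nat) (adj : rel 'I_n) (A : 'M[bool]_(m, n)) : Prop :=
  forall i : 'I_m, row_support A i != set0 -> induced_connected adj (row_support A i).

Definition mulv (m n : nat) (A : 'M[bool]_(m, n)) (x : 'I_n -> R) (i : 'I_m) : R :=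
  \big[Rplus/R0]_(j : 'I_n | A i j) x j.

Definition ksparse (n k : nat) (x : 'I_n -> R) : Prop :=
  exists S : {set 'I_n}, #|S| <= k /\ forall j, j \notin S -> x j = R0.

Definition identifies (m n k : nat) (A : 'M[bool]_(m, n)) : Prop :=
  forall x1 x2 : 'I_n -> R, ksparse k x1 -> ksparse k x2 ->
    x1 <> x2 -> mulv A x1 <> mulv A x2.

(* The least natural number satisfying P (chosen by Hilbert's epsilon;
   P always has a least element in our uses). *)
Definition min_nat (P : nat -> Prop) : nat :=
  epsilon (inhabits 0) (fun m => P m /\ forall m', P m' -> m <= m').

Definition MG (n k : nat) (adj : rel 'I_n) : nat :=
  min_nat (fun m => exists A : 'M[bool]_(m, n),
                      measurement_matrix adj A /\ identifies k A).

Definition MC (k N : nat) : nat :=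
  min_nat (fun m => exists A : 'M[bool]_(m, N), identifies k A).

Definition G4 (n : nat) : rel 'I_n :=
  fun i j => [|| val j == (i + 1) %% n, val j == (i + n - 1) %% n,
                 val j == (i + 2) %% n | val j == (i + n - 2) %% n].
Arguments G4 n : clear implicits.

(* Main.v *)
Require Import Defs.
From Stdlib Require Import Reals Lra Classical ClassicalEpsilon FunctionalExtensionality.
From HB Require Import structures.
From mathcomp Require Import all_boot all_algebra zify.
Set Implicit Arguments. Unset Strict Implicit. Unset Printing Implicit Defensive.

HB.instance Definition _ := Monoid.isComLaw.Build R R0 Rplus (fun a b c => esym (Rplus_assoc a b c)) Rplus_comm Rplus_0_l.

Lemma halfs n : n = n./2 + uphalf n /\ n = odd n + n./2 * 2.
Proof. rewrite uphalf_half -[n in n = _ + _]odd_double_half -[n in _ /\ n = _]odd_double_half -muln2; lia. Qed.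

Lemma ov_lt n (i : 'I_(n./2)) : i.*2.+1 < n.
Proof. have [h1 h2] := halfs n; have := ltn_ord i; rewrite -muln2. lia. Qed.
Lemma ev_lt n (i : 'I_(uphalf n)) : i.*2 < n.
Proof. have [h1 h2] := halfs n; move: (ltn_ord i); move: (nat_of_ord i) => m; rewrite uphalf_half -muln2. case: (odd n) h2 => /=; lia. Qed.

Definition odd_v n (i : 'I_(n./2)) : 'I_n := Ordinal (ov_lt i).
Definition even_v n (i : 'I_(uphalf n)) : 'I_n := Ordinal (ev_lt i).

Lemma odd_v_inj n : injective (@odd_v n).
Proof. move=> i j /(congr1 val) /=; rewrite -!muln2 => h; apply: ord_inj; lia. Qed.
Lemma even_v_inj n : injective (@even_v n).
Proof. move=> i j /(congr1 val) /=; rewrite -!muln2 => h; apply: ord_inj; lia. Qed.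

Lemma odd_half_lt n (j : 'I_n) : odd j -> j./2 < n./2.
Proof.
move=> oj; have [h1 h2] := halfs n; have := ltn_ord j.
rewrite -{1}(odd_double_half j) oj -muln2; case: (odd n) h2 => /=; lia.
Qed.
Lemma even_half_lt n (j : 'I_n) : ~~ odd j -> j./2 < uphalf n.
Proof.
move=> oj; have [h1 h2] := halfs n; have := ltn_ord j.
rewrite -{1}(odd_double_half j) (negbTE oj) uphalf_half -muln2; case: (odd n) h2 => /=; lia.
Qed.

Lemma odd_vE n (j : 'I_n) (oj : odd j) : j = odd_v (Ordinal (odd_half_lt oj)).
Proof. apply: ord_inj; rewrite /= -{1}(odd_double_half j) oj. by []. Qed.
Lemma even_vE n (j : 'I_n) (oj : ~~ odd j) : j = even_v (Ordinal (even_half_lt oj)).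
Proof. apply: ord_inj; rewrite /= -{1}(odd_double_half j) (negbTE oj). by []. Qed.

Definition getP q (P : pred 'I_q) (c : nat) : bool :=
  if (insub c : option 'I_q) is Some c' then P c' else false.

Lemma sum_odd n (x : 'I_n -> R) (P : pred 'I_(n./2)) :
  \big[Rplus/R0]_(j : 'I_n | odd j && getP P j./2) x j =
  \big[Rplus/R0]_(i | P i) x (odd_v i).
Proof.
transitivity (\big[Rplus/R0]_(j in (@odd_v n) @: [set i | P i]) x j).
  apply: eq_bigl => j; case: (boolP (odd j)) => oj /=.
    rewrite /getP; case: insubP => [c' _ vc|nP].
      rewrite [in RHS](odd_vE oj).
      have -> : Ordinal (odd_half_lt oj) = c' by apply: ord_inj; rewrite /= vc.
      by rewrite (mem_imset _ _ (@odd_v_inj n)) inE.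
    by rewrite (odd_half_lt oj) in nP.
  apply/esym/negbTE/imsetP => [[i _ e]]; move: oj; by rewrite e /= odd_double.
rewrite big_imset; last by move=> i j _ _; exact: odd_v_inj.
by apply: eq_bigl => i; rewrite inE.
Qed.

Lemma sum_even n (x : 'I_n -> R) (P : pred 'I_(uphalf n)) :
  \big[Rplus/R0]_(j : 'I_n | ~~ odd j && getP P j./2) x j =
  \big[Rplus/R0]_(i | P i) x (even_v i).
Proof.
transitivity (\big[Rplus/R0]_(j in (@even_v n) @: [set i | P i]) x j).
  apply: eq_bigl => j; case: (boolP (odd j)) => oj /=.
    apply/esym/negbTE/imsetP => [[i _ e]]; move: oj; by rewrite e /= odd_double.
  rewrite /getP; case: insubP => [c' _ vc|nP].
    rewrite [in RHS](even_vE oj).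
    have -> : Ordinal (even_half_lt oj) = c' by apply: ord_inj; rewrite /= vc.
    by rewrite (mem_imset _ _ (@even_v_inj n)) inE.
  by rewrite (even_half_lt oj) in nP.
rewrite big_imset; last by move=> i j _ _; exact: even_v_inj.
by apply: eq_bigl => i; rewrite inE.
Qed.

Lemma ksparse_comp n N k (f : 'I_N -> 'I_n) (x : 'I_n -> R) :
  injective f -> ksparse k x -> ksparse k (fun i => x (f i)).
Proof.
move=> fi [S [cS hS]]; exists (f @^-1: S); split.
  rewrite -(card_imset _ fi); apply: leq_trans cS; apply: subset_leq_card.
  by apply/subsetP => y /imsetP [z]; rewrite inE => zS ->.
by move=> j; rewrite inE => /hS.
Qed.

Lemma min_nat_spec (P : nat -> Prop) : (exists m, P m) ->
  P (min_nat P) /\ forall m', P m' -> min_nat P <= m'.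
Proof.
move=> [m Pm]; rewrite /min_nat; apply: (epsilon_spec (inhabits 0) (fun m => P m /\ forall m', P m' -> m <= m')).
elim: m {-2}m (leqnn m) Pm => [|m IH] m0 Hm0 Pm0.
  exists m0; split=> // m' _; lia.
case: (classic (exists m', P m' /\ m' < m0)) => [[m' [Pm' lt]]|nex].
  apply: (IH m') => //; lia.
exists m0; split=> // m' Pm'; case: (leqP m0 m') => // lt; exfalso; apply: nex; by exists m'.
Qed.

Lemma MC_ex k N : exists m, exists A : 'M[bool]_(m, N), identifies k A.
Proof.
exists N, (\matrix_(i < N, j < N) (i == j))%R => x1 x2 _ _ ne e; apply: ne.
apply: functional_extensionality => i; move/(congr1 (fun f => f i)): e.
rewrite /mulv.
have E : forall x : 'I_N -> R, \big[Rplus/R0]_(j | (\matrix_(i < N, j < N) (i == j))%R i j) x j = x i.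
  move=> x; rewrite (eq_bigl (fun j => j == i)); first exact: big_pred1_eq.
  by move=> j; rewrite mxE eq_sym.
by rewrite !E.
Qed.
Lemma adj1 n (i j : 'I_n) : (j:nat) = i + 1 -> G4 n i j && G4 n j i.
Proof.
move=> e; have lt : i + 1 < n by rewrite -e ltn_ord.
have h1 : (j:nat) == (i+1) %% n by rewrite modn_small // e.
have h2 : (i:nat) == (j+n-1) %% n.
  by rewrite (_ : j + n - 1 = i + n) ?modnDr ?modn_small //; lia.
by rewrite /G4 h1 h2 /= ?orbT.
Qed.

Lemma adj2 n (i j : 'I_n) : (j:nat) = i + 2 -> G4 n i j && G4 n j i.
Proof.
move=> e; have lt : i + 2 < n by rewrite -e ltn_ord.
have h1 : (j:nat) == (i+2) %% n by rewrite modn_small // e.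
have h2 : (i:nat) == (j+n-2) %% n.
  by rewrite (_ : j + n - 2 = i + n) ?modnDr ?modn_small //; lia.
by rewrite /G4 h1 h2 /= ?orbT.
Qed.

Definition Rel n (S : {set 'I_n}) := [rel a b | [&& a \in S, b \in S & G4 n a b]].

Lemma conn_par n (S : {set 'I_n}) (b : bool) (c : 'I_n) :
  c = b :> nat -> (forall j : 'I_n, odd j = b -> j \in S) ->
  forall v : 'I_n, odd v = b -> connect (Rel S) c v /\ connect (Rel S) v c.
Proof.
move=> ec hS v ov.
have [m ev] : exists m, (v:nat) = b + m.*2 by exists v./2; rewrite -{1}(odd_double_half v) ov.
elim: m v ev ov => [|m IH] v ev ov.
  by rewrite addn0 in ev; have -> : v = c by apply: ord_inj; rewrite ev ec.
have lt : b + m.*2 < n by move: (ltn_ord v); rewrite ev doubleS; lia.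
have ow : odd (Ordinal lt) = b by rewrite /= oddD odd_double addbF; by case: (b)...
have [c1 c2] := IH (Ordinal lt) erefl ow.
have e2 : (v:nat) = Ordinal lt + 2 by rewrite ev /= doubleS; lia.
have /andP[a1 a2] := adj2 e2.
have Sv := hS v ov; have Sw := hS _ ow.
split.
  apply: connect_trans c1 (connect1 _); by rewrite /= Sv Sw a1.
apply: connect_trans (connect1 _) c2; by rewrite /= Sv Sw a2.
Qed.

Lemma conn_all n (S : {set 'I_n}) (b : bool) (c : 'I_n) : 2 <= n ->
  c = b :> nat -> (forall j : 'I_n, odd j = b -> j \in S) ->
  induced_connected (G4 n) S.
Proof.
move=> n2 ec hS.
suff H : forall v, v \in S -> connect (Rel S) c v /\ connect (Rel S) v c.
  apply/forall_inP => u uS; apply/forall_inP => v vS.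
  exact: connect_trans (H u uS).2 (H v vS).1.
move=> v vS; case: (boolP (odd v == b)) => [/eqP|]; first exact: conn_par.
move=> nb.
have [w [ow /andP[a1 a2]]] : exists w : 'I_n, odd w = b /\ G4 n v w && G4 n w v.
  case: (posnP v) => [v0|vp].
    have lt : 1 < n by exact: n2.
    exists (Ordinal lt); split.
      by move: nb; rewrite v0; case: (b).
    by apply: adj1; rewrite /= v0.
  have lt : v.-1 < n by move: (ltn_ord v); lia.
  exists (Ordinal lt); split.
    by move: nb; rewrite -{1}(prednK vp) /=; case: (b); case: (odd v.-1).
  have e1 : (v:nat) = Ordinal lt + 1 by rewrite /=; lia.
  have /andP[x y] := adj1 e1.
  by rewrite x y.
have [c1 c2] := conn_par ec hS ow; have Sw := hS w ow.
split.
  apply: connect_trans c1 (connect1 _); by rewrite /= vS Sw a2.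
apply: connect_trans (connect1 _) c2; by rewrite /= vS Sw a1.
Qed.

Definition getA p q (A : 'M[bool]_(p,q)) (r c : nat) : bool :=
  if (insub r : option 'I_p) is Some r' then getP (A r') c else false.

Lemma getA_ord p q (A : 'M[bool]_(p,q)) (r : 'I_p) c : getA A r c = getP (A r) c.
Proof. by rewrite /getA valK. Qed.

Definition Bf n a b (A1 : 'M[bool]_(a, n./2)) (A2 : 'M[bool]_(b, uphalf n)) (r j : nat) : bool :=
  if r < a then (if odd j then getA A1 r j./2 else true)
  else if r < a + b then (if odd j then true else getA A2 (r - a) j./2)
  else if r == a + b then ~~ odd j else odd j.

Definition Bm n a b (A1 : 'M[bool]_(a, n./2)) (A2 : 'M[bool]_(b, uphalf n)) : 'M[bool]_(a+b+2, n) :=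
  (\matrix_(r < a+b+2, j < n) Bf A1 A2 r j)%R.

Lemma lrow_lt a b (r : 'I_a) : (r:nat) < a + b + 2. Proof. have := ltn_ord r; lia. Qed.
Lemma mrow_lt a b (r : 'I_b) : a + r < a + b + 2. Proof. have := ltn_ord r; lia. Qed.
Lemma erow_lt a b : a + b < a + b + 2. Proof. lia. Qed.
Lemma orow_lt a b : a + b + 1 < a + b + 2. Proof. lia. Qed.

Section Rows.
Lemma row_e n a b (A1 : 'M[bool]_(a, n./2)) (A2 : 'M[bool]_(b, uphalf n)) (x : 'I_n -> R) :
  mulv (Bm A1 A2) x (Ordinal (erow_lt a b)) = \big[Rplus/R0]_(j : 'I_n | ~~ odd j) x j.
Proof.
apply: eq_bigl => j; rewrite mxE /Bf /=.
have -> : (a + b < a) = false by apply/negP; lia.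
by rewrite ltnn eqxx.
Qed.

Lemma row_o n a b (A1 : 'M[bool]_(a, n./2)) (A2 : 'M[bool]_(b, uphalf n)) (x : 'I_n -> R) :
  mulv (Bm A1 A2) x (Ordinal (orow_lt a b)) = \big[Rplus/R0]_(j : 'I_n | odd j) x j.
Proof.
apply: eq_bigl => j; rewrite mxE /Bf /=.
have -> : (a + b + 1 < a) = false by apply/negP; lia.
have -> : (a + b + 1 < a + b) = false by apply/negP; lia.
have -> : (a + b + 1 == a + b) = false by apply/negP; lia.
by [].
Qed.

Lemma row_l n a b (A1 : 'M[bool]_(a, n./2)) (A2 : 'M[bool]_(b, uphalf n)) (x : 'I_n -> R) (r : 'I_a) :
  mulv (Bm A1 A2) x (Ordinal (lrow_lt b r)) =
  Rplus (mulv A1 (fun i => x (odd_v i)) r) (mulv (Bm A1 A2) x (Ordinal (erow_lt a b))).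
Proof.
rewrite row_e /mulv (bigID (fun j : 'I_n => odd j)) /=; congr (Rplus _ _).
  rewrite -sum_odd; apply: eq_bigl => j; rewrite mxE /Bf /= ltn_ord getA_ord.
  by case: (odd j); rewrite ?andbT ?andbF.
apply: eq_bigl => j; rewrite mxE /Bf /= ltn_ord.
by case: (odd j); rewrite ?andbT ?andbF.
Qed.

Lemma row_m n a b (A1 : 'M[bool]_(a, n./2)) (A2 : 'M[bool]_(b, uphalf n)) (x : 'I_n -> R) (r : 'I_b) :
  mulv (Bm A1 A2) x (Ordinal (mrow_lt a r)) =
  Rplus (mulv A2 (fun i => x (even_v i)) r) (mulv (Bm A1 A2) x (Ordinal (orow_lt a b))).
Proof.
have h1 : (a + r < a) = false by apply/negP; lia.
have h2 : (a + r < a + b) by have := ltn_ord r; lia.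
rewrite row_o /mulv (bigID (fun j : 'I_n => odd j)) /= [RHS]Rplus_comm; congr (Rplus _ _).
  apply: eq_bigl => j; rewrite mxE /Bf /= h1 h2.
  by case: (odd j); rewrite ?andbT ?andbF.
rewrite -sum_even; apply: eq_bigl => j; rewrite mxE /Bf /= h1 h2 addKn getA_ord.
by case: (odd j); rewrite ?andbT ?andbF.
Qed.
End Rows.

Lemma Bm_meas n a b (A1 : 'M[bool]_(a, n./2)) (A2 : 'M[bool]_(b, uphalf n)) :
  5 <= n -> measurement_matrix (G4 n) (Bm A1 A2).
Proof.
move=> hn r _; rewrite /row_support.
have n2 : 2 <= n by lia.
have n0 : 0 < n by lia.
have n1 : 1 < n by lia.
case: (boolP (r < a)) => h1.
  apply: (conn_all (b:=false) (c:=Ordinal n0) n2 erefl) => j oj.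
  by rewrite inE mxE /Bf h1 oj.
case: (boolP (r < a + b)) => h2.
  apply: (conn_all (b:=true) (c:=Ordinal n1) n2 erefl) => j oj.
  by rewrite inE mxE /Bf (negbTE h1) h2 oj.
case: (boolP (r == a + b :> nat)) => h3.
  apply: (conn_all (b:=false) (c:=Ordinal n0) n2 erefl) => j oj.
  by rewrite inE mxE /Bf (negbTE h1) (negbTE h2) h3 oj.
apply: (conn_all (b:=true) (c:=Ordinal n1) n2 erefl) => j oj.
by rewrite inE mxE /Bf (negbTE h1) (negbTE h2) (negbTE h3) oj.
Qed.

Lemma Bm_ident n k a b (A1 : 'M[bool]_(a, n./2)) (A2 : 'M[bool]_(b, uphalf n)) :
  identifies k A1 -> identifies k A2 -> identifies k (Bm A1 A2).
Proof.
move=> i1 i2 x1 x2 s1 s2 ne e.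
have eo : (fun i => x1 (odd_v i)) = (fun i => x2 (odd_v i)).
  apply: NNPP => h.
  apply: (i1 _ _ (ksparse_comp (@odd_v_inj n) s1) (ksparse_comp (@odd_v_inj n) s2) h).
  apply: functional_extensionality => r.
  have := congr1 (fun f => f (Ordinal (lrow_lt b r))) e.
  have := congr1 (fun f => f (Ordinal (erow_lt a b))) e.
  rewrite /= !row_l => ->. lra.
have ee : (fun i => x1 (even_v i)) = (fun i => x2 (even_v i)).
  apply: NNPP => h.
  apply: (i2 _ _ (ksparse_comp (@even_v_inj n) s1) (ksparse_comp (@even_v_inj n) s2) h).
  apply: functional_extensionality => r.
  have := congr1 (fun f => f (Ordinal (mrow_lt a r))) e.
  have := congr1 (fun f => f (Ordinal (orow_lt a b))) e.
  rewrite /= !row_m => ->. lra.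
apply: ne; apply: functional_extensionality => j; case: (boolP (odd j)) => oj.
  rewrite (odd_vE oj); exact: (congr1 (fun f => f (Ordinal (odd_half_lt oj))) eo).
rewrite (even_vE oj); exact: (congr1 (fun f => f (Ordinal (even_half_lt oj))) ee).
Qed.

Theorem theorem2 (n k : nat) (hn : 5 <= n) (hk : 1 <= k) :
  MG k (G4 n) <= MC k n./2 + MC k (uphalf n) + 2.
Proof.
have [[A1 iA1] _] := min_nat_spec (MC_ex k n./2).
have [[A2 iA2] _] := min_nat_spec (MC_ex k (uphalf n)).
have HB : exists A : 'M[bool]_(MC k n./2 + MC k (uphalf n) + 2, n),
    measurement_matrix (G4 n) A /\ identifies k A.
  by exists (Bm A1 A2); split; [exact: Bm_meas | exact: Bm_ident].
exact: (min_nat_spec (ex_intro _ _ HB)).2 _ HB.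
Qed.
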